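(* For every integer $n\ge 2$, $\theta_{n-1}(\ell_\infty,\ell_\infty)=\sqrt{n}^{\,n}$, i.e. $\max\{\|C_{n-1}(B)\|_\infty : B\in\mathbb{C}^{n\times n},\ \|\mathrm{col}_i(B)\|_\infty=1,\ i=1,\ldots,n\}=n^{n/2}$.
   Context: $C_k(B)$ is the $k$th compound of $B$: the $\binom nk\times\binom nk$ matrix of all $k\times k$ minors $\det B(\alpha|\beta)$, indexed by $k$-subsets of $\{1,\ldots,n\}$. $\mathrm{col}_i(B)$ is the $i$th column. $\|\cdot\|_\infty$ is the max-modulus vector norm and, for matrices, the induced operator norm (maximum absolute row sum). $\theta_k(\mu,\nu)=\max\{\mu(C_k(B)): \nu(\mathrm{col}_i(B))=1\ \forall i\}$. *)

(* Defs.v *)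
From HB Require Import structures.
From mathcomp Require Import all_boot all_order all_algebra.
From mathcomp Require Import complex.
From mathcomp Require Import reals.
Set Implicit Arguments. Unset Strict Implicit. Unset Printing Implicit Defensive.
Import Order.TTheory GRing.Theory Num.Theory.
Local Open Scope ring_scope.

Section Compound.
Variable R : realType.
Local Notation C := R[i].

Definition cmod (z : C) : R := ComplexField.Normc.normc z.

Definition vnorm_inf m (v : 'cV[C]_m) : R := \big[Num.max/0]_(i < m) cmod (v i 0).

(* induced operator norm ||A||_oo = maximum absolute row sum *)
Definition mxnorm_inf m p (A : 'M[C]_(m, p)) : R :=
  \big[Num.max/0]_(i < m) \sum_(j < p) cmod (A i j).

(* the k-subsets of {1..n} (here {0..n-1}), used as index set *)
Definition ksets (n k : nat) : {set {set 'I_n}} := [set A : {set 'I_n} | #|A| == k].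

(* the k x k minor det B(a|b): rows a, columns b, both listed increasingly *)
Definition minor n k (B : 'M[C]_n) (a b : {set 'I_n}) : C :=
  \det (\matrix_(i < k, j < k)
          nth 0 [seq nth 0 [seq B r c | c <- enum b] j | r <- enum a] i).

(* the k-th compound matrix C_k(B), indexed by k-subsets of {0..n-1}
   (the index type has #|ksets n k| = binomial n k elements) *)
Definition compound n k (B : 'M[C]_n) : 'M[C]_(#|ksets n k|) :=
  \matrix_(i, j) minor k B (enum_val i) (enum_val j).

Definition unit_cols n (B : 'M[C]_n) : Prop := forall i : 'I_n, vnorm_inf (col i B) = 1.

End Compound.

(* Main.v *)
Require Import Defs.
From HB Require Import structures.
From mathcomp Require Import all_boot all_order all_algebra.
From mathcomp Require Import complex.
From mathcomp Require Import reals.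
From mathcomp Require Import zify ring lra.
From mathcomp Require Import sesquilinear spectral.
From mathcomp Require Import cyclic separable cyclotomic.
Import Order.TTheory GRing.Theory Num.Theory Num.Def.
Local Open Scope ring_scope.
Lemma sorted_enum_ord n : sorted (fun x y : 'I_n => (val x < val y)%N) (enum 'I_n).
Proof. by have := iota_ltn_sorted 0 n; rewrite -val_enum_ord sorted_map. Qed.

Lemma enum_setC1 n (r : 'I_n) : enum [set~ r] = map (lift r) (enum 'I_n.-1).
Proof.
apply: (@irr_sorted_eq _ (fun x y : 'I_n => (val x < val y)%N)).
- by move=> x y z /= ; apply: ltn_trans.
- by move=> x /=; rewrite ltnn.
- rewrite /enum_mem; apply: sorted_filter; first by move=> x y z; apply: ltn_trans.
  by have := sorted_enum_ord n; rewrite enumT.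
- rewrite sorted_map; apply: sub_sorted (sorted_enum_ord n.-1).
  move=> x y /= xy; rewrite ltn_neqAle leq_bump2 (ltnW xy) andbT.
  by apply/negP => /eqP /(can_inj (bumpK r)) ex; move: xy; rewrite ex ltnn.
- move=> x; rewrite mem_enum in_setC1; apply/idP/mapP.
  + by rewrite eq_sym => /unlift_some [j -> _]; exists j; rewrite ?mem_enum.
  + by case=> j _ ->; rewrite eq_sym neq_lift.
Qed.

Section S.
Variable R : realType.
Local Notation C := R[i].
Local Open Scope sesquilinear_scope.
Lemma minorC1 n (B : 'M[C]_n) r c :
  minor n.-1 B [set~ r] [set~ c] = \det (row' r (col' c B)).
Proof.
rewrite /minor !enum_setC1; congr (\det _); apply/matrixP => i j; rewrite !mxE.
rewrite -map_comp (nth_map i) ?size_enum_ord // nth_ord_enum /=.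
by rewrite -map_comp (nth_map j) ?size_enum_ord // nth_ord_enum.
Qed.

Lemma ksetsE n : (0 < n)%N -> ksets n n.-1 = [set [set~ c] | c : 'I_n].
Proof.
move=> n0; apply/setP => b; rewrite inE; apply/idP/imsetP.
- rewrite -[n in (_ == n.-1)%N]card_ord => /eqP hb.
  have : #|~: b| == 1%N.
    by have := cardsC b; rewrite hb card_ord => h; apply/eqP; lia.
  by case/cards1P => c hc; exists c => //; rewrite -hc setCK.
- by case=> c _ ->; rewrite cardsC1 card_ord.
Qed.
Lemma hadamard N (M : 'M[C]_N) : (forall i j, `|M i j| <= 1) ->
  `|\det M| ^+ 2 <= N%:R ^+ N.
Proof.
move=> hM.
set G := M *m M ^t conjC.
have detG : \det G = `|\det M| ^+ 2.
  by rewrite det_mulmx det_map_mx det_tr normCK.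
have GtG : G ^t conjC = G by rewrite /G trmx_mul map_mxM trmxCK.
have Gn : G \is normalmx by apply/normalmxP; rewrite GtG.
have /orthomx_spectralP := Gn.
set P := spectralmx G; set d := spectral_diag G => GE.
have Pu : P \is unitarymx := spectral_unitarymx G.
have Punit : P \in unitmx := unitarymx_unit Pu.
have dE : diag_mx d = (P *m M) *m (P *m M) ^t conjC.
  rewrite trmx_mul map_mxM !mulmxA -(mulmxA P M) -/G -(invmx_unitary Pu).
  by rewrite GE !mulmxA mulmxV // mul1mx -mulmxA mulmxV // mulmx1.
have d_ge0 : forall i, 0 <= d 0 i.
  move=> i; have := congr1 (fun A : 'M[C]_N => A i i) dE; rewrite !mxE eqxx /= mulr1n => ->.
  by apply: sumr_ge0 => k _; rewrite !mxE mul_conjC_ge0.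
have detd : \det G = \prod_i d 0 i.
  by rewrite {1}GE !det_mulmx det_inv det_diag mulrC mulrA mulrV ?mul1r //.
have trG : \tr G = \sum_i d 0 i.
  rewrite {1}GE mxtrace_mulC mulmxA mulmxV // mul1mx.
  by rewrite /mxtrace; apply: eq_bigr => i _; rewrite mxE eqxx mulr1n.
have trle : \tr G <= N%:R * N%:R.
  apply: (@le_trans _ _ (\sum_(i < N) \sum_(k < N) (1 : C))).
    rewrite /mxtrace; apply: ler_sum => i _; rewrite !mxE; apply: ler_sum => k _.
    by rewrite !mxE -normCK expr_le1 // ?normr_ge0 // hM.
  by rewrite !sumr_const card_ord mulr_natr.
rewrite -detG detd.
have agm := (leif_AGM (A := predT) (E := fun i => d 0 i) (fun i _ => d_ge0 i)).1.
simpl in agm.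
have cN : #|@predT 'I_N| = N by rewrite cardT size_enum_ord.
rewrite cN in agm.
apply: (le_trans agm).
have -> : (\sum_(i in predT) d 0 i) = \tr G by rewrite trG.
have tr0 : 0 <= \tr G by rewrite trG sumr_ge0.
apply: lerXn2r; rewrite ?nnegrE ?divr_ge0 ?ler0n //.
have [N0|N0] := posnP N.
  have -> : (N%:R : C) = 0 by rewrite N0.
  by rewrite invr0 mulr0.
by rewrite ler_pdivrMr ?ltr0n.
Qed.


Lemma cof_bound N (B : 'M[C]_N) r : (forall i j, `|B i j| <= 1) ->
  (\sum_c `|cofactor B r c|) ^+ 2 <= N%:R ^+ N.
Proof.
move=> hB.
pose z c := if cofactor B r c == 0 then 0 else `|cofactor B r c| / cofactor B r c.
pose M := \matrix_(i, j) if i == r then z j else B i j.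
have cofM c : cofactor M r c = cofactor B r c.
  rewrite /cofactor; congr (_ * \det _); apply/matrixP => i j.
  by rewrite !mxE eq_sym (negbTE (neq_lift r i)).
have hM : forall i j, `|M i j| <= 1.
  move=> i j; rewrite mxE; case: ifP => _ //; rewrite /z.
  case: eqP => [_|h]; first by rewrite normr0.
  by rewrite normrM normfV normr_id divff ?normr_eq0; last by apply/eqP.
have detM : \det M = \sum_c `|cofactor B r c|.
  rewrite (expand_det_row _ r); apply: eq_bigr => c _; rewrite cofM mxE eqxx /z.
  case: eqP => [->|h]; first by rewrite mul0r normr0.
  by rewrite divfK //; apply/eqP.
have := @hadamard N M hM; rewrite detM ger0_norm //.
by apply: sumr_ge0 => c _; apply: normr_ge0.
Qed.
Lemma prim_root_ex N : (0 < N)%N -> exists w : C, N.-primitive_root w.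
Proof.
pose p : {poly C} := 'X^N - 1; have [r Dp] := closed_field_poly_normal p.
move=> N_gt0; rewrite (monicP _) ?monicXnsubC // scale1r in Dp.
have rn1: all N.-unity_root r by apply/allP=> z; rewrite -root_prod_XsubC -Dp.
have sz_r: (N < (size r).+1)%N.
  by rewrite -(size_prod_XsubC r id) -Dp size_XnsubC.
have [|z] := hasP (has_prim_root N_gt0 rn1 _ sz_r); last by exists z.
by rewrite -separable_prod_XsubC -Dp separable_Xn_sub_1 // pnatr_eq0 -lt0n.
Qed.

Lemma fourier N : (0 < N)%N -> exists F : 'M[C]_N,
  (forall i j, `|F i j| = 1) /\ (forall r, \sum_c `|cofactor F r c| = `|\det F|)
  /\ `|\det F| ^+ 2 = N%:R ^+ N.
Proof.
move=> N0; have [w pw] := @prim_root_ex N N0.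
have wN : w ^+ N = 1 := prim_expr_order pw.
have w1 : `|w| = 1.
  by apply/eqP; rewrite -(pexpr_eq1 N0) ?normr_ge0 // -normrX wN normr1.
have wX m : `|w ^+ m| = 1 by rewrite normrX w1 expr1n.
have wX0 m : w ^+ m != 0 by rewrite -normr_eq0 wX oner_eq0.
pose F := \matrix_(i < N, j < N) w ^+ (i * j).
have cw (j : 'I_N) k : (w ^+ (j * k))^* = w ^+ ((N - j) * k).
  apply: (@mulIf _ (w ^+ (j * k))); first exact: wX0. rewrite -normCKC wX expr1n -exprD -mulnDl.
  by rewrite subnK ?(ltnW (ltn_ord j)) // exprM wN expr1n.
have FF : F *m F ^t conjC = N%:R%:M.
  apply/matrixP => i j; rewrite !mxE.
  under eq_bigr => k _ do rewrite !mxE cw -exprD -mulnDl exprM.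
  set x := w ^+ (i + (N - j)).
  have xN : x ^+ N = 1 by rewrite /x -exprM mulnC exprM wN expr1n.
  have [eij|nij] := eqVneq i j.
    have -> : x = 1 by rewrite /x eij subnKC ?(ltnW (ltn_ord j)) // wN.
    by rewrite mulr1n; under eq_bigr => k _ do rewrite expr1n; rewrite sumr_const card_ord.
  rewrite mulr0n.
  have x1 : x != 1.
    rewrite /x -(prim_order_dvd pw); apply/negP => /dvdnP [q hq].
    have hi := ltn_ord i; have hj := ltn_ord j.
    have hv : (i : nat) != j by [].
    case: q hq => [|[|q]] hq; try lia.
  have : (x - 1) * \sum_(k < N) x ^+ k = 0 by rewrite -subrX1 xN subrr.
  by move/eqP; rewrite mulf_eq0 subr_eq0 (negbTE x1) /= => /eqP.
have detF : `|\det F| ^+ 2 = N%:R ^+ N.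
  by rewrite normCK -det_map_mx -(det_tr (map_mx conjC F)) map_trmx -det_mulmx FF det_scalar.
have adjF : \det F *: F ^t conjC = N%:R *: \adj F.
  by rewrite -[RHS]mul_mx_scalar -FF mulmxA mul_adj_mx mul_scalar_mx.
have N0' : (N%:R : C) != 0 by rewrite pnatr_eq0 -lt0n.
have cofE r c : `|cofactor F r c| = `|\det F| / N%:R.
  have := congr1 (fun A : 'M[C]_N => A c r) adjF; rewrite !mxE => e.
  have := congr1 normr e; rewrite !normrM norm_conjC wX mulr1 (ger0_norm (ler0n _ _)) => ->.
  by rewrite [RHS]mulrC mulKf.
exists F; split; [|split] => //.
- by move=> i j; rewrite mxE wX.
- move=> r; under eq_bigr => c _ do rewrite cofE.
  by rewrite sumr_const card_ord -[_ *+ N]mulr_natr divfK.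
Qed.

Lemma cmodE (z : C) : ((cmod z)%:C)%C = `|z|.
Proof. by []. Qed.

Lemma cmod_ge0 (z : C) : 0 <= cmod z.
Proof. by rewrite -(@lecR R) cmodE normr_ge0. Qed.

Lemma sum_cmodE I (r : seq I) (P : pred I) (F : I -> C) :
  ((\sum_(i <- r | P i) cmod (F i))%:C)%C = \sum_(i <- r | P i) `|F i|.
Proof. by rewrite raddf_sum. Qed.

Lemma rowsumE n (B : 'M[C]_n) (i : 'I_#|ksets n n.-1|) : (0 < n)%N ->
  exists r, \sum_j cmod (compound n.-1 B i j) = \sum_c cmod (cofactor B r c).
Proof.
move=> n0; have : enum_val i \in [set [set~ c] | c : 'I_n] by rewrite -ksetsE // enum_valP.
case/imsetP => r _ er.
exists r.
transitivity (\sum_(b in ksets n n.-1) cmod (minor n.-1 B (enum_val i) b)).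
  by rewrite [RHS]big_enum_val; apply: eq_bigr => j _; rewrite mxE.
rewrite er ksetsE // big_imset /=; last by move=> c c' _ _ /setC_inj/set1_inj.
apply: eq_bigr => c _; rewrite minorC1; apply: (@complexI R).
by rewrite !cmodE /cofactor normrM normrX normrN1 expr1n mul1r.
Qed.

Lemma sqrt_le (N : nat) (t : R) : 0 <= t -> t ^+ 2 <= N%:R ^+ N ->
  t <= Num.sqrt (N%:R : R) ^+ N.
Proof.
move=> t0 h; rewrite -(@ler_pXn2r _ 2) // ?nnegrE ?exprn_ge0 ?sqrtr_ge0 //.
by rewrite -exprM mulnC exprM sqr_sqrtr ?ler0n.
Qed.

Lemma sqrt_eq (N : nat) (t : R) : 0 <= t -> t ^+ 2 = N%:R ^+ N ->
  t = Num.sqrt (N%:R : R) ^+ N.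
Proof.
move=> t0 h; apply/eqP; rewrite -(@eqrXn2 _ 2) // ?exprn_ge0 ?sqrtr_ge0 //.
by rewrite -exprM mulnC exprM sqr_sqrtr ?ler0n // h.
Qed.

End S.

Theorem theorem2p11 (R : realType) (n : nat) (hn : (2 <= n)%N) :
  (forall B : 'M[R[i]]_n, unit_cols B ->
     mxnorm_inf (compound n.-1 B) <= Num.sqrt (n%:R : R) ^+ n) /\
  (exists B : 'M[R[i]]_n, unit_cols B /\
     mxnorm_inf (compound n.-1 B) = Num.sqrt (n%:R : R) ^+ n).
Proof.
have n0 : (0 < n)%N by apply: leq_trans hn.
split.
- move=> B hB.
  have hB1 : forall i j, `|B i j| <= 1.
    move=> i j; rewrite -cmodE -(rmorph1 (real_complex R)) lecR.
    rewrite -(hB j) /vnorm_inf.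
    have := le_bigmax 0 (fun k => cmod (col j B k 0)) i.
    by rewrite mxE.
  rewrite /mxnorm_inf; apply: bigmax_le; first by rewrite exprn_ge0 ?sqrtr_ge0.
  move=> i _; have [r ->] := @rowsumE R n B i n0.
  apply: sqrt_le; first by apply: sumr_ge0 => c _; apply: cmod_ge0.
  rewrite -(@lecR R) rmorphXn /= sum_cmodE rmorphXn /= rmorph_nat.
  exact: cof_bound.
- have [F [hF1 [hFs hFd]]] := @fourier R n n0.
  exists F; split.
    move=> j; apply: le_anti; apply/andP; split.
      apply: bigmax_le => // k _; rewrite -(@lecR R) mxE cmodE hF1 //.
    have := le_bigmax 0 (fun k => cmod (col j F k 0)) (Ordinal n0).
    by apply: le_trans; rewrite -(@lecR R) mxE cmodE hF1.
  have rowE : forall i, \sum_j cmod (compound n.-1 F i j) = Num.sqrt (n%:R : R) ^+ n.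
    move=> i; have [r ->] := @rowsumE R n F i n0.
    apply: sqrt_eq; first by apply: sumr_ge0 => c _; apply: cmod_ge0.
    apply: (@complexI R); rewrite rmorphXn /= sum_cmodE hFs hFd rmorphXn /= rmorph_nat //.
  have k0 : (0 < #|ksets n n.-1|)%N.
    by apply/card_gt0P; exists [set~ Ordinal n0]; rewrite inE cardsC1 card_ord.
  rewrite /mxnorm_inf; apply: le_anti; apply/andP; split.
    by apply: bigmax_le => [|i _]; rewrite ?rowE ?exprn_ge0 ?sqrtr_ge0.
  have := le_bigmax 0 (fun i => \sum_j cmod (compound n.-1 F i j)) (Ordinal k0).
  by rewrite rowE.
Qed.
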